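(* Let $\varepsilon>0$ and $\lambda<0$. Then the equilibrium point $$e_{2\lambda}=\Big(\frac{a}{\lambda-a_1},\frac{b}{\lambda-a_2},\frac{c}{\lambda-a_3}\Big)$$ of the $\varepsilon$-revised system $$\dot{\mathbf x}=\mathbf x\times\mathbf m(\mathbf x)+\varepsilon[(\mathbf x\times\mathbf m(\mathbf x))\times\mathbf m(\mathbf x)]$$ is Lyapunov stable.
   Context: Fix constants $0<a_1<a_2<a_3$ and $a,b,c\in\mathbb R$. Set $\mathbf m(\mathbf x)=(a_1x^1+a,\ a_2x^2+b,\ a_3x^3+c)$; $\times$ is the cross product in $\mathbb R^3$. *)

(* Defs.v *)
From Stdlib Require Import Reals.
From Coquelicot Require Import Coquelicot.
Open Scope R_scope.

Definition vec3 := (R * R * R)%type.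
Definition c1 (v : vec3) : R := fst (fst v).
Definition c2 (v : vec3) : R := snd (fst v).
Definition c3 (v : vec3) : R := snd v.

Definition vadd (u v : vec3) : vec3 := (c1 u + c1 v, c2 u + c2 v, c3 u + c3 v).
Definition vsub (u v : vec3) : vec3 := (c1 u - c1 v, c2 u - c2 v, c3 u - c3 v).
Definition vscale (k : R) (v : vec3) : vec3 := (k * c1 v, k * c2 v, k * c3 v).

Definition cross (u v : vec3) : vec3 :=
  (c2 u * c3 v - c3 u * c2 v,
   c3 u * c1 v - c1 u * c3 v,
   c1 u * c2 v - c2 u * c1 v).

Definition norm3 (v : vec3) : R := sqrt (c1 v ^ 2 + c2 v ^ 2 + c3 v ^ 2).

Definition mvec (a1 a2 a3 a b c : R) (x : vec3) : vec3 :=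
  (a1 * c1 x + a, a2 * c2 x + b, a3 * c3 x + c).

Definition revised_field (a1 a2 a3 a b c eps : R) (x : vec3) : vec3 :=
  let m := mvec a1 a2 a3 a b c x in
  vadd (cross x m) (vscale eps (cross (cross x m) m)).

Definition is_solution_on (F : vec3 -> vec3) (x : R -> vec3) (T : R) : Prop :=
  (forall t, 0 < t < T ->
     is_derive (fun s => c1 (x s)) t (c1 (F (x t))) /\
     is_derive (fun s => c2 (x s)) t (c2 (F (x t))) /\
     is_derive (fun s => c3 (x s)) t (c3 (F (x t)))) /\
  filterlim (fun s => c1 (x s)) (at_right 0) (locally (c1 (x 0))) /\
  filterlim (fun s => c2 (x s)) (at_right 0) (locally (c2 (x 0))) /\
  filterlim (fun s => c3 (x s)) (at_right 0) (locally (c3 (x 0))).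

Definition lyapunov_stable (F : vec3 -> vec3) (p : vec3) : Prop :=
  forall e, 0 < e -> exists d, 0 < d /\
    forall (T : R) (x : R -> vec3), is_solution_on F x T ->
      norm3 (vsub (x 0) p) < d ->
      forall t, 0 <= t < T -> norm3 (vsub (x t) p) < e.

(* Main.v *)
Require Import Defs.
From Coquelicot Require Import Coquelicot.
From Stdlib Require Import Reals Lra Psatz.
Require Import Defs.
Open Scope R_scope.
Lemma sq_der (u : R -> R) t du k e : is_derive u t du ->
  is_derive (fun s => k * (u s - e)^2) t (2*k*(u t - e)*du).
Proof.
intro H.
eapply is_derive_ext.
{ intro s. reflexivity. }
replace (2*k*(u t - e)*du) with (du * (2*k*(u t - e))) by ring.
apply (is_derive_comp (fun y => k*(y-e)^2) u). 2: exact H.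
auto_derive; auto. ring.
Qed.
Lemma sq_lim (u : R -> R) u0 k e : filterlim u (at_right 0) (locally u0) ->
  filterlim (fun s => k * (u s - e)^2) (at_right 0) (locally (k*(u0-e)^2)).
Proof.
intro H.
apply (filterlim_comp _ _ _ u (fun y => k*(y-e)^2) _ (locally u0)); auto.
apply (ex_derive_continuous (fun y => k*(y-e)^2)). auto_derive; auto.
Qed.
Lemma sum_lim (f g : R -> R) l1 l2 : filterlim f (at_right 0) (locally l1) ->
  filterlim g (at_right 0) (locally l2) ->
  filterlim (fun s => f s + g s) (at_right 0) (locally (l1 + l2)).
Proof.
intros H1 H2.
apply (filterlim_comp_2 f g Rplus H1 H2).
apply (filterlim_plus l1 l2).
Qed.
Lemma le_lim (g : R -> R) g0 t : 0 < t -> filterlim g (at_right 0) (locally g0) ->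
  (forall s, 0 < s < t -> g t <= g s) -> g t <= g0.
Proof.
intros ht Hl Hs.
assert (H := filterlim_le (F := at_right 0) (fun _ => g t) g (g t) g0).
simpl in H. apply H.
- exists (mkposreal t ht). intros y Hy Hy0. apply Hs. split; auto.
  unfold ball in Hy; simpl in Hy; unfold AbsRing_ball, abs, minus, plus, opp in Hy; simpl in Hy.
  apply Rabs_def2 in Hy. lra.
- apply filterlim_const.
- exact Hl.
Qed.
Lemma mono (g dg : R -> R) T : (forall t, 0<t<T -> is_derive g t (dg t)) ->
  (forall t, 0<t<T -> dg t <= 0) -> forall s t, 0<s -> s<=t -> t<T -> g t <= g s.
Proof.
intros Hd Hn s t hs hst htT.
destruct (MVT_gen g s t dg) as [c [Hc Heq]].
- intros x Hx. rewrite Rmin_left in Hx by lra. rewrite Rmax_right in Hx by lra.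
  apply Hd; lra.
- intros x Hx. rewrite Rmin_left in Hx by lra. rewrite Rmax_right in Hx by lra.
  apply continuity_pt_filterlim. apply (ex_derive_continuous g).
  eexists. apply Hd; lra.
- rewrite Rmin_left in Hc by lra. rewrite Rmax_right in Hc by lra.
  assert (dg c <= 0) by (apply Hn; lra).
  assert (dg c * (t - s) <= 0). { apply Rmult_le_0_r; lra. }
  lra.
Qed.

Lemma dplus (f h : R -> R) t df dh : is_derive f t df -> is_derive h t dh ->
  is_derive (fun s => f s + h s) t (df + dh).
Proof. intros. apply (is_derive_plus f h); auto. Qed.

Lemma normE u E1 E2 E3 : norm3 (vsub u (E1,E2,E3)) =
  sqrt ((c1 u - E1)^2 + (c2 u - E2)^2 + (c3 u - E3)^2).
Proof. reflexivity. Qed.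

Lemma final_arith a1 a2 a3 lam ep p1 p2 p3 q1 q2 q3 :
  0 < a1 -> a1 < a2 -> a2 < a3 -> lam < 0 -> 0 < ep ->
  (a1-lam)*q1^2 + (a2-lam)*q2^2 + (a3-lam)*q3^2 <= (a1-lam)*p1^2 + (a2-lam)*p2^2 + (a3-lam)*p3^2 ->
  p1^2+p2^2+p3^2 < (ep * (a1-lam) / (a3-lam))^2 ->
  q1^2+q2^2+q3^2 < ep^2.
Proof.
intros h1 h12 h23 hl he Hm H0.
set (k1 := a1 - lam) in *. set (k3 := a3 - lam) in *.
assert (hk1 : 0 < k1) by (unfold k1; lra).
assert (hk13 : k1 <= k3) by (unfold k1, k3; lra).
pose proof (pow2_ge_0 p1). pose proof (pow2_ge_0 p2). pose proof (pow2_ge_0 p3).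
pose proof (pow2_ge_0 q1). pose proof (pow2_ge_0 q2). pose proof (pow2_ge_0 q3).
assert (g0 : k1*p1^2 + (a2-lam)*p2^2 + k3*p3^2 <= k3 * (p1^2+p2^2+p3^2)).
{ assert (k1*p1^2 <= k3*p1^2) by (apply Rmult_le_compat_r; lra).
  assert ((a2-lam)*p2^2 <= k3*p2^2) by (apply Rmult_le_compat_r; unfold k3; lra). lra. }
assert (gt : k1 * (q1^2+q2^2+q3^2) <= k1*q1^2 + (a2-lam)*q2^2 + k3*q3^2).
{ assert (k1*q3^2 <= k3*q3^2) by (apply Rmult_le_compat_r; lra).
  assert (k1*q2^2 <= (a2-lam)*q2^2) by (apply Rmult_le_compat_r; unfold k1; lra). lra. }
assert (hdd : k3 * (ep * k1 / k3)^2 = k1 * (ep^2 * (k1 / k3))).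
{ field. lra. }
assert (k1 / k3 <= 1). { apply (proj1 (Rcomplements.Rdiv_le_1 k1 k3 ltac:(lra))); lra. }
assert (k3 * (p1^2+p2^2+p3^2) < k3 * (ep * k1 / k3)^2) by (apply Rmult_lt_compat_l; lra).
assert (ep^2 * (k1/k3) <= ep^2) by (pose proof (pow2_ge_0 ep); nra).
assert (k1 * (q1^2+q2^2+q3^2) < k1 * ep^2) by nra.
apply (Rmult_lt_reg_l k1); lra.
Qed.

Lemma ident (a1 a2 a3 lam eps e1 e2 e3 x1 x2 x3 : R) :
  let a := (lam - a1)*e1 in let b := (lam - a2)*e2 in let c := (lam - a3)*e3 in
  let F := revised_field a1 a2 a3 a b c eps (x1,x2,x3) in
  2*(a1-lam)*(x1-e1)*c1 F + 2*(a2-lam)*(x2-e2)*c2 F + 2*(a3-lam)*(x3-e3)*c3 F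
  = 2*lam*eps*(c1 (cross (x1,x2,x3) (mvec a1 a2 a3 a b c (x1,x2,x3)))^2
     + c2 (cross (x1,x2,x3) (mvec a1 a2 a3 a b c (x1,x2,x3)))^2
     + c3 (cross (x1,x2,x3) (mvec a1 a2 a3 a b c (x1,x2,x3)))^2).
Proof.
intros. unfold F, a, b, c, revised_field, vadd, vscale, cross, mvec, c1, c2, c3; simpl. ring.
Qed.

Lemma sqrt_sq_lt s d : 0 <= s -> 0 < d -> sqrt s < d -> s < d^2.
Proof.
intros hs hd H. rewrite <- (sqrt_sqrt s hs).
assert (0 <= sqrt s) by apply sqrt_pos. nra.
Qed.

Lemma sq_lt_sqrt s d : 0 <= s -> 0 < d -> s < d^2 -> sqrt s < d.
Proof.
intros hs hd H. replace d with (sqrt (d^2)).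
- apply sqrt_lt_1_alt; lra.
- rewrite sqrt_pow2; lra.
Qed.

Theorem theorem6p5 (a1 a2 a3 a b c eps lam : R)
  (h1 : 0 < a1) (h12 : a1 < a2) (h23 : a2 < a3)
  (heps : 0 < eps) (hlam : lam < 0) :
  let e2 : vec3 := (a / (lam - a1), b / (lam - a2), c / (lam - a3)) in
  revised_field a1 a2 a3 a b c eps e2 = (0, 0, 0) /\
  lyapunov_stable (revised_field a1 a2 a3 a b c eps) e2.
Proof.
intro e.
assert (ha : a = (lam - a1) * (a / (lam - a1))) by (field; lra).
assert (hb : b = (lam - a2) * (b / (lam - a2))) by (field; lra).
assert (hc : c = (lam - a3) * (c / (lam - a3))) by (field; lra).
unfold e; clear e; revert ha hb hc.
generalize (a / (lam - a1)) (b / (lam - a2)) (c / (lam - a3)).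
intros E1 E2 E3 ha hb hc. subst a b c.
set (a := (lam - a1) * E1). set (b := (lam - a2) * E2). set (c := (lam - a3) * E3).
split.
{ unfold revised_field, vadd, vscale, cross, mvec, c1, c2, c3, a, b, c; simpl.
  f_equal; [f_equal|]; ring. }
intros ep hep.
set (k1 := a1 - lam). set (k3 := a3 - lam).
assert (hk1 : 0 < k1) by (unfold k1; lra).
assert (hk13 : k1 <= k3) by (unfold k1, k3; lra).
exists (ep * k1 / k3). split.
{ apply Rdiv_lt_0_compat; nra. }
intros T x Hsol H0 t Ht.
destruct Hsol as [Hd [L1 [L2 L3]]].
set (g := fun s => (a1-lam)*(c1 (x s) - E1)^2 + (a2-lam)*(c2 (x s) - E2)^2
                   + (a3-lam)*(c3 (x s) - E3)^2).
set (F := revised_field a1 a2 a3 a b c eps).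
set (dg := fun s => 2*(a1-lam)*(c1 (x s)-E1)*c1 (F (x s))
   + 2*(a2-lam)*(c2 (x s)-E2)*c2 (F (x s)) + 2*(a3-lam)*(c3 (x s)-E3)*c3 (F (x s))).
assert (Hg : forall s, 0 < s < T -> is_derive g s (dg s)).
{ intros s hs. destruct (Hd s hs) as [D1 [D2 D3]].
  unfold g, dg. apply dplus. apply dplus.
  all: eapply is_derive_ext; [intro; reflexivity|].
  - replace (2 * (a1 - lam) * (c1 (x s) - E1) * c1 (F (x s))) with
      (2 * (a1 - lam) * (c1 (x s) - E1) * c1 (F (x s))) by ring.
    apply sq_der; exact D1.
  - apply sq_der; exact D2.
  - apply sq_der; exact D3. }
assert (Hn : forall s, 0 < s < T -> dg s <= 0).
{ intros s _. unfold dg, F. destruct (x s) as [[y1 y2] y3].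
  pose proof (ident a1 a2 a3 lam eps E1 E2 E3 y1 y2 y3) as Hi. cbv zeta in Hi. unfold a, b, c. change (c1 (y1,y2,y3)) with y1. change (c2 (y1,y2,y3)) with y2. change (c3 (y1,y2,y3)) with y3. rewrite Hi.
  set (q := _ + _ + _).
  assert (0 <= q) by (unfold q; nra).
  assert (lam * eps <= 0) by nra. nra. }
assert (Hmon : g t <= g 0).
{ destruct (Rle_lt_or_eq_dec 0 t (proj1 Ht)) as [tp| <-]; [|lra].
  apply (le_lim g (g 0) t tp).
  - unfold g. apply sum_lim; [apply sum_lim|]; apply sq_lim; assumption.
  - intros s hs. apply (mono g dg T Hg Hn); lra. }
rewrite normE in H0 |- *.
set (S0 := (c1 (x 0) - E1) ^ 2 + (c2 (x 0) - E2) ^ 2 + (c3 (x 0) - E3) ^ 2) in *.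
set (St := (c1 (x t) - E1) ^ 2 + (c2 (x t) - E2) ^ 2 + (c3 (x t) - E3) ^ 2) in *.
assert (hS0 : 0 <= S0) by (unfold S0; pose proof (pow2_ge_0 (c1 (x 0) - E1)); pose proof (pow2_ge_0 (c2 (x 0) - E2)); pose proof (pow2_ge_0 (c3 (x 0) - E3)); lra).
assert (hSt : 0 <= St) by (unfold St; pose proof (pow2_ge_0 (c1 (x t) - E1)); pose proof (pow2_ge_0 (c2 (x t) - E2)); pose proof (pow2_ge_0 (c3 (x t) - E3)); lra).
assert (hd : 0 < ep * k1 / k3) by (apply Rdiv_lt_0_compat; nra).
apply sqrt_sq_lt in H0; auto.
apply sq_lt_sqrt; auto.
unfold g in Hmon. unfold S0 in H0. unfold St. unfold k1, k3 in *.
clear - Hmon H0 h1 h12 h23 hlam hep.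
apply (final_arith a1 a2 a3 lam ep (c1 (x 0) - E1) (c2 (x 0) - E2) (c3 (x 0) - E3)); assumption.
Qed.
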